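(* For every sufficiently small $\nu>0$ there exists $\alpha_0>0$ such that for all $\alpha,\varepsilon\in(0,\alpha_0]$ there exists $\gamma_0>0$ such that for all $\gamma\in(0,\gamma_0]$ there exists $n_0$ such that for all $n\ge n_0$: every graph $G$ on $n$ vertices with $\delta(G)\ge n/2$ that is $\gamma$-close to $K_{n/2,n/2}$ is an $(\alpha,\varepsilon,\nu)$-superextremal biclique.
   Context: A graph $G$ on $n$ vertices is $\gamma$-close to $K_{n/2,n/2}$ if there exists $A\subseteq V(G)$ with $|A|=\lfloor n/2\rfloor$ such that $G[A]$ has at most $\gamma n^2$ edges. $d(v,X)$ is the number of neighbours of $v$ in $X$. A graph $G$ on $n$ vertices is an $(\alpha,\varepsilon,\nu)$-superextremal biclique if there is a partition $V(G)=A\uplus B$ with: (B1) $0\le |B|-|A|\le\alpha n$; (B2) $d(a,B)\ge(1/2-\varepsilon)n$ for all but at most $\alpha n$ vertices $a\in A$; (B3) $d(a,B)\ge\nu n$ for all $a\in A$; (B4) $d(b,A)\ge(1/2-\varepsilon)n$ for all but at most $\alpha n$ vertices $b\in B$; (B5) $d(b,A)\ge(1/4-\varepsilon)n$ for all $b\in B$; (B6) if $|A|\ne\lfloor n/2\rfloor$, then $d(b,B)\le 2\nu n$ for all $b\in B$. *)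

(* Defs.v *)
From HB Require Import structures.
From mathcomp Require Import all_boot all_order all_algebra.
Set Implicit Arguments. Unset Strict Implicit. Unset Printing Implicit Defensive.
Import Order.TTheory GRing.Theory Num.Theory.
Local Open Scope ring_scope.

Definition simple_graph (n : nat) (e : rel 'I_n) : Prop :=
  (forall u v, e u v = e v u) /\ (forall v, ~~ e v v).

Definition deg_in (n : nat) (e : rel 'I_n) (v : 'I_n) (X : {set 'I_n}) : nat :=
  #|[set u in X | e v u]|.

Definition edges_in (n : nat) (e : rel 'I_n) (A : {set 'I_n}) : nat :=
  #|[set p : 'I_n * 'I_n | [&& p.1 \in A, p.2 \in A, (p.1 < p.2)%N & e p.1 p.2]]|.

Definition min_deg_half (R : realFieldType) (n : nat) (e : rel 'I_n) : Prop :=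
  forall v : 'I_n, (n%:R / 2 : R) <= (deg_in e v [set: 'I_n])%:R.

Definition gamma_close (R : realFieldType) (gamma : R) (n : nat) (e : rel 'I_n) : Prop :=
  exists A : {set 'I_n}, #|A| = n./2 /\ (edges_in e A)%:R <= gamma * (n%:R ^+ 2).

Definition superextremal (R : realFieldType) (alpha eps nu : R) (n : nat)
    (e : rel 'I_n) : Prop :=
  exists A : {set 'I_n}, let B := ~: A in
  [/\ ((#|A| <= #|B|)%N /\ ((#|B| - #|A|)%N%:R <= alpha * n%:R)),
      (#|[set a in A | (deg_in e a B)%:R < (2^-1 - eps) * n%:R]|%:R
                   <= alpha * n%:R) /\
      (forall a, a \in A -> nu * n%:R <= (deg_in e a B)%:R),
      (#|[set b in B | (deg_in e b A)%:R < (2^-1 - eps) * n%:R]|%:R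
                   <= alpha * n%:R),
      (forall b, b \in B -> (4^-1 - eps) * n%:R <= (deg_in e b A)%:R)
    & (#|A| <> n./2 ->
                 forall b, b \in B -> (deg_in e b B)%:R <= 2 * nu * n%:R)].

(* Main.v *)
Require Import Defs.
From HB Require Import structures.
From mathcomp Require Import all_boot all_order all_algebra zify lra.
Import Order.TTheory GRing.Theory Num.Theory.
Set Implicit Arguments. Unset Strict Implicit.

Lemma degE n (e : rel 'I_n) v (Z : {set 'I_n}) :
  deg_in e v Z = \sum_(u in Z) (e v u : nat).
Proof.
rewrite /deg_in -sum1_card [LHS]big_mkcond [RHS]big_mkcond; apply: eq_bigr => u _.
by rewrite inE; case: (u \in Z); case: (e v u).
Qed.

Lemma deg_sub n (e : rel 'I_n) v (Z Z' : {set 'I_n}) :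
  Z \subset Z' -> (deg_in e v Z <= deg_in e v Z')%N.
Proof.
move=> sZ; apply: subset_leq_card; apply/subsetP=> u; rewrite !inE => /andP[uZ ->].
by rewrite (subsetP sZ _ uZ).
Qed.

Lemma deg_card n (e : rel 'I_n) v (Z : {set 'I_n}) : (deg_in e v Z <= #|Z|)%N.
Proof. by apply: subset_leq_card; apply/subsetP=> u; rewrite !inE => /andP[]. Qed.

Lemma deg_split n (e : rel 'I_n) v (Z : {set 'I_n}) :
  (deg_in e v Z + deg_in e v (~: Z) = deg_in e v setT)%N.
Proof.
rewrite /deg_in -(cardsID Z [set u in setT | e v u]); congr (_ + _); apply: eq_card=> u;
by rewrite !inE; case: (u \in Z); case: (e v u).
Qed.

Lemma deg_diff n (e : rel 'I_n) v (Z W : {set 'I_n}) :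
  (deg_in e v Z <= deg_in e v (Z :\: W) + #|W|)%N.
Proof.
rewrite /deg_in; apply: leq_trans (leq_card_setU _ _).
apply: subset_leq_card; apply/subsetP=> u; rewrite !inE.
by case: (u \in W); case: (u \in Z); case: (e v u).
Qed.

Lemma dc_swap n (e : rel 'I_n) (X Y : {set 'I_n}) : simple_graph e ->
  (\sum_(x in X) deg_in e x Y = \sum_(y in Y) deg_in e y X)%N.
Proof.
move=> [sym _].
under eq_bigr => x _ do rewrite degE.
under [RHS]eq_bigr => y _ do rewrite degE.
rewrite exchange_big /=; apply: eq_bigr => y _; apply: eq_bigr => x _.
by rewrite sym.
Qed.

Lemma handshake n (e : rel 'I_n) (A : {set 'I_n}) : simple_graph e ->
  (\sum_(a in A) deg_in e a A = 2 * edges_in e A)%N.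
Proof.
move=> [sym irr].
pose g (a u : 'I_n) : nat := [&& a \in A, u \in A, (a < u)%N & e a u].
have E1 : edges_in e A = (\sum_a \sum_u g a u)%N.
  rewrite /edges_in -sum1_card big_mkcond /= pair_big /=.
  by apply: eq_bigr => p _; rewrite inE /g; case: p.
have E2 : (\sum_(a in A) deg_in e a A = \sum_a \sum_u (g a u + g u a))%N.
  rewrite big_mkcond /=; apply: eq_bigr => a _; rewrite degE big_mkcond /=.
  case aA: (a \in A); last first.
    by rewrite big1 // => u _; rewrite /g aA /= andbF.
  apply: eq_bigr => u _; rewrite /g aA /= (sym u a).
  case uA: (u \in A) => //=.
  case: (ltngtP a u) => [h|h|h] /=; rewrite ?andbF ?addn0 //.
  have -> : a = u by apply: val_inj.
  by rewrite (negbTE (irr u)).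
rewrite E2 E1; under eq_bigr => a _ do rewrite big_split.
rewrite big_split /= [X in (_ + X)%N]exchange_big /=.
by rewrite addnn -mul2n.
Qed.
Local Open Scope ring_scope.

Lemma markov (R : realFieldType) n (P : {set 'I_n}) (f : 'I_n -> R) (c : R) :
  (forall v, v \in P -> 0 <= f v) ->
  #|[set v in P | c <= f v]|%:R * c <= \sum_(v in P) f v.
Proof.
move=> f0; case: (lerP 0 c) => c0; last first.
  apply: le_trans (sumr_ge0 _ f0).
  by rewrite mulr_ge0_le0 // ltW.
rewrite mulr_natl -sumr_const big_mkcond [X in _ <= X]big_mkcond /=.
apply: ler_sum => v _; rewrite inE.
case vP: (v \in P) => //=.
case: ifP => // _; first exact: f0.
Qed.

Lemma half_bounds n : (2 * n./2 <= n)%N /\ (n <= 2 * n./2 + 1)%N.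
Proof. rewrite -divn2; lia. Qed.

Lemma cardarith (a1 c a0 x y n : nat) : (a1 + c = n)%N -> (a1 <= a0 + y)%N ->
  (a0 <= a1 + x)%N -> (2 * a0 <= n)%N -> (n <= 2 * a0 + 1)%N ->
  (c <= a1 + (2 * (x + y)).+1)%N /\ (a1 <= c + (2 * (x + y)).+1)%N.
Proof. lia. Qed.
Local Open Scope ring_scope.

Lemma deg_del n (e : rel 'I_n) b (Z : {set 'I_n}) : simple_graph e ->
  deg_in e b (Z :\ b) = deg_in e b Z.
Proof.
move=> [_ irr]; apply: eq_card => u; rewrite !inE.
case: (eqVneq u b) => [->|] //=; by rewrite (negbTE (irr b)) andbF.
Qed.

Lemma final (R : realFieldType) n (e : rel 'I_n) (alpha eps nu : R) (S : {set 'I_n}) (K : nat) :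
  simple_graph e ->
  (#|S| <= #|~:S|)%N -> (#|~:S| <= #|S| + K)%N ->
  K%:R <= nu * n%:R -> K%:R <= alpha * n%:R ->
  (forall v, v \in S -> nu * n%:R + K%:R <= (deg_in e v (~:S))%:R) ->
  (forall v, v \in ~:S -> (4^-1 - eps) * n%:R <= (deg_in e v S)%:R) ->
  #|[set v in S | (deg_in e v (~:S))%:R < (2^-1 - eps) * n%:R + K%:R]|%:R + K%:R
     <= alpha * n%:R ->
  #|[set v in ~:S | (deg_in e v S)%:R < (2^-1 - eps) * n%:R + K%:R]|%:R <= alpha * n%:R ->
  superextremal alpha eps nu e.
Proof.
move=> Ge hSL hLS hKnu hKal degS degL badS badL.
set N : R := n%:R.
set L := ~:S.
rewrite -/L in hSL hLS degS degL badS badL.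
have cardSL : (#|S| + #|L| = n)%N by rewrite cardsC card_ord.
set k := (n./2 - #|S|)%N.
have hk : (k <= K)%N by rewrite /k -divn2; lia.
pose P (M : {set 'I_n}) := [&& M \subset L, (#|M| <= k)%N &
   [forall m in M, 2 * nu * N - #|M|%:R <= (deg_in e m (L :\: M))%:R]].
have P0 : P set0.
  rewrite /P sub0set cards0 /=; apply/forall_inP => m; by rewrite inE.
case: (@arg_maxnP _ set0 P (fun M : {set 'I_n} => #|M|) P0) => M PM Mmax.
move/and3P: PM => [ML Mk /forall_inP Mdeg].
have hB : ~: (S :|: M) = L :\: M by rewrite setCU setDE.
have SM0 : S :&: M = set0.
  apply/setP => x; rewrite !inE; case xM: (x \in M); rewrite ?andbF //.
  by have := subsetP ML x xM; rewrite inE => /negbTE ->.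
have cA : #|S :|: M| = (#|S| + #|M|)%N by rewrite cardsU SM0 cards0 subn0.
have cB : #|L :\: M| = (n - (#|S| + #|M|))%N.
  by rewrite -hB; have := cardsC (S :|: M); rewrite card_ord cA; lia.
have hMK : (#|M| <= K)%N by apply: leq_trans Mk hk.
have hMKr : (#|M|%:R <= K%:R :> R) by rewrite ler_nat.
have K0 : (0 <= K%:R :> R) by [].
exists (S :|: M); cbv zeta; rewrite hB cA cB.
split.
- split; first by rewrite /k -divn2 in Mk *; lia.
  apply: le_trans hKal; rewrite ler_nat; rewrite /k -divn2 in Mk *; lia.
- split.
  + apply: le_trans badS.
    apply: (@le_trans _ _ ((#|M| + #|[set v in S | ((deg_in e v L)%:R <
             (2^-1 - eps) * N + K%:R)%R]|)%N%:R)); last by rewrite natrD; lra.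
    rewrite ler_nat; apply: leq_trans (leq_card_setU _ _); apply: subset_leq_card.
    apply/subsetP => v; rewrite !inE => /andP[/orP[vS|vM] hv]; rewrite ?vM ?orbT //.
    rewrite vS /=; apply/orP; right.
    have := deg_diff e v L M; rewrite -(ler_nat R) natrD => h.
    lra.
  + move=> a; rewrite inE => /orP[aS|aM].
    * have := degS a aS; have := deg_diff e a L M; rewrite -(ler_nat R) natrD.
      lra.
    * have := Mdeg a aM; lra.
- apply: le_trans badL.
  rewrite ler_nat; apply: subset_leq_card; apply/subsetP => v; rewrite !inE.
  move=> /andP[/andP[vM vS] hv]; rewrite vS /=.
  have : (deg_in e v S <= deg_in e v (S :|: M))%N by apply: deg_sub; apply: subsetUl.
  rewrite -(ler_nat R) => h; move: h hv K0; clear; lra.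
- move=> b; rewrite !inE => /andP[bM bS].
  have : (deg_in e b S <= deg_in e b (S :|: M))%N by apply: deg_sub; apply: subsetUl.
  rewrite -(ler_nat R) => h; have := degL b; rewrite inE bS => /(_ isT); lra.
- move=> hne b bB.
  rewrite leNgt; apply/negP => hb.
  have bL : b \in L by move: bB; rewrite inE => /andP[].
  have bM : b \notin M by move: bB; rewrite inE => /andP[].
  have Mlt : (#|M| < k)%N.
    move: Mk hne hSL cardSL; rewrite /k -!divn2; clear; lia.
  have PM' : P (b |: M).
    rewrite /P; apply/and3P; split.
    - by rewrite subUset sub1set bL ML.
    - by rewrite cardsU1 bM /= add1n.
    apply/forall_inP => m; rewrite !inE => /orP[/eqP ->|mM].
    + have -> : L :\: (b |: M) = (L :\: M) :\ b.
        by apply/setP => x; rewrite !inE; case: (x == b); case: (x \in M).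
      rewrite deg_del //; apply: le_trans (ltW hb); rewrite lerBlDr lerDl; exact: ler0n.
    + have -> : L :\: (b |: M) = (L :\: M) :\: [set b].
        by apply/setP => x; rewrite !inE; case: (x == b); case: (x \in M).
      have := Mdeg m mM; have := deg_diff e m (L :\: M) [set b].
      rewrite cards1 cardsU1 bM /= -(ler_nat R) !natrD; lra.
  by have := Mmax _ PM'; rewrite cardsU1 bM /= add1n /geq ltnn.
Qed.
Local Open Scope ring_scope.

Lemma arith (R : realFieldType) (N a e nu gam x y m1 m2 a0 E : R) :
  0 < a -> a <= nu -> nu <= 1/16 -> 0 < e -> e <= nu -> 0 < gam ->
  100 * gam <= a * e -> 100 <= a * e * N ->
  0 <= x -> x * (N / 4) <= 2 * E -> E <= gam * N ^+ 2 ->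
  2 * a0 <= N -> N <= 2 * a0 + 1 ->
  0 <= y -> y * (a0 - N / 4) <= N / 4 + 2 * E ->
  0 <= m1 -> m1 * (e * N / 2) <= 2 * E ->
  0 <= m2 -> m2 * (e * N / 4) <= N / 4 + 2 * E ->
  let K := 2 * (x + y) + 1 in
  [/\ K <= nu * N, K <= a * N, nu * N + K <= N / 4 - (x + y) &
      (4^-1 - e) * N <= N / 4 - (x + y)] /\ [/\
      y + m1 + K <= a * N, x + m2 + K <= a * N,
      K + y <= e * N / 2 & K + x + 1/2 <= 3 * e * N / 4].
Proof.
move=> a0' anu nu16 e0 enu g0 hg hP x0 hx hE ha1 ha2 y0 hy m10 hm1 m20 hm2 K.
set g := gam * N.
set P := a * e * N.
have hPP : 100 <= P by [].
have N0 : 0 < N by nra.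
have hP2 : 100 * g <= P by rewrite /g /P; nra.
have hg0 : 0 <= g by rewrite /g; nra.
have hE' : E <= g * N by rewrite /g -mulrA -expr2.
have hx' : x <= 8 * g by nra.
have aN : 16 * P <= a * N by rewrite /P; nra.
have eN : 16 * P <= e * N by rewrite /P; nra.
have NN : 16 * (e * N) <= N by nra.
have N4 : 4 <= N by lra.
have hy' : y <= 2 + 16 * g.
  have h1 : y * (N / 4 - 1/2) <= N / 4 + 2 * g * N by nra.
  rewrite leNgt; apply/negP => hc.
  have h2 : (2 + 16 * g) * (N / 4 - 1/2) < y * (N / 4 - 1/2).
    by rewrite ltr_pM2r //; lra.
  have h3 : 0 <= g * (N - 4) by apply: mulr_ge0; lra.
  lra.
have em1 : e * m1 <= 4 * g by nra.
have em2 : e * m2 <= 1 + 8 * g by nra.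
have nuN : a * N <= nu * N by nra.
have nuN2 : 16 * (nu * N) <= N by nra.
have m1b : m1 <= a * N / 20.
  have : e * m1 <= e * (a * N / 20) by rewrite /P in hP2; nra.
  by rewrite ler_pM2l.
have m2b : m2 <= a * N / 10.
  have : e * m2 <= e * (a * N / 10) by rewrite /P in hP hP2; nra.
  by rewrite ler_pM2l.
rewrite /K; split; split; lra.
Qed.
Local Open Scope ring_scope.

Lemma construct (R : realFieldType) n (e : rel 'I_n) (alpha eps nu gamma : R)
    (A0 : {set 'I_n}) :
  simple_graph e -> min_deg_half R e -> #|A0| = n./2 ->
  (edges_in e A0)%:R <= gamma * n%:R ^+ 2 ->
  0 < alpha -> alpha <= nu -> nu <= 1/16 -> 0 < eps -> eps <= nu -> 0 < gamma ->
  100 * gamma <= alpha * eps -> 100 <= alpha * eps * n%:R ->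
  superextremal alpha eps nu e.
Proof.
move=> Ge Gd cA0 hE ha anu nu16 he enu hg hg2 hP.
set N : R := n%:R.
have N0 : 0 <= N by rewrite /N ler0n.
set B0 := ~: A0.
set X := [set a in A0 | (deg_in e a B0)%:R < N / 4].
set Y := [set b in B0 | (deg_in e b A0)%:R < N / 4].
set A1 := (A0 :\: X) :|: Y.
set E : R := (edges_in e A0)%:R.
set a0 : R := #|A0|%:R.
have degT v : N / 2 <= (deg_in e v setT)%:R by apply: Gd.
have dsplit v (Z : {set 'I_n}) : (deg_in e v Z)%:R + (deg_in e v (~: Z))%:R = (deg_in e v setT)%:R :> R.
  by rewrite -natrD deg_split.
have ddiff v (Z W : {set 'I_n}) : (deg_in e v Z)%:R <= (deg_in e v (Z :\: W))%:R + #|W|%:R :> R.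
  by rewrite -natrD ler_nat deg_diff.
have dsub v (Z Z' : {set 'I_n}) : Z \subset Z' -> (deg_in e v Z)%:R <= (deg_in e v Z')%:R :> R.
  by move=> h; rewrite ler_nat deg_sub.
have dcard v (Z : {set 'I_n}) : (deg_in e v Z)%:R <= #|Z|%:R :> R by rewrite ler_nat deg_card.
have hs : \sum_(a in A0) (deg_in e a A0)%:R = 2 * E :> R.
  by rewrite -natr_sum handshake // natrM.
have ha0 : 2 * a0 <= N /\ N <= 2 * a0 + 1.
  have [h1 h2] := half_bounds n.
  rewrite /a0 /N cA0; split.
  + by move: h1; rewrite -(ler_nat R) natrM.
  + by move: h2; rewrite -(ler_nat R) natrD natrM.
have hX : #|X|%:R * (N / 4) <= 2 * E.
  rewrite -hs; apply: le_trans (markov (P:=A0) (f := fun v => (deg_in e v A0)%:R) (N / 4) _); last by move=> v _; exact: ler0n.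
  apply: ler_wpM2r; first by lra.
  rewrite ler_nat; apply: subset_leq_card; apply/subsetP => v; rewrite !inE.
  move=> /andP[vA hv]; rewrite vA /=.
  have := dsplit v A0; have := degT v; lra.
have hae : alpha * eps <= 1/256 by nra.
have N4 : 4 <= N.
  have : alpha * eps * N <= N / 256.
    have h := mulr_ge0 (N0) (_ : 0 <= 1/256 - alpha * eps).
    rewrite mulrC; nra.
  lra.
have hsw : \sum_(b in B0) (deg_in e b A0)%:R = \sum_(a in A0) (deg_in e a B0)%:R :> R.
  by rewrite -!natr_sum dc_swap.
have hsA : a0 * (N / 2) - 2 * E <= \sum_(a in A0) (deg_in e a B0)%:R.
  have : \sum_(a in A0) (N / 2 - (deg_in e a A0)%:R) <= \sum_(a in A0) (deg_in e a B0)%:R.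
    apply: ler_sum => a _; have := dsplit a A0; have := degT a; rewrite -/B0; lra.
  rewrite sumrB sumr_const hs -mulr_natr -/a0 => h; lra.
have cB0 : #|B0|%:R = N - a0 :> R.
  have := cardsC A0; rewrite card_ord => h.
  have h' : ((#|A0| + #|B0|)%N%:R : R) = N by rewrite h.
  rewrite natrD -/a0 in h'; lra.
have hdef : \sum_(b in B0) (a0 - (deg_in e b A0)%:R) <= N / 4 + 2 * E.
  rewrite sumrB sumr_const hsw -[a0 *+ _]mulr_natr cB0.
  case: ha0 => h1 h2.
  have a00 : 0 <= a0 by rewrite /a0 ler0n.
  have := mulr_ge0 a00 (_ : 0 <= 1/2 - (N/2 - a0)).
  nra.
have def0 b : b \in B0 -> 0 <= a0 - (deg_in e b A0)%:R.
  by move=> _; have := dcard b A0; rewrite -/a0; lra.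
have hY : #|Y|%:R * (a0 - N / 4) <= N / 4 + 2 * E.
  apply: le_trans hdef.
  apply: le_trans (markov (P:=B0) (f := fun b => a0 - (deg_in e b A0)%:R) (a0 - N / 4) def0).
  apply: ler_wpM2r; first by case: ha0 => h1 h2; lra.
  rewrite ler_nat; apply: subset_leq_card; apply/subsetP => v; rewrite !inE.
  move=> /andP[vB hv]; rewrite vB /=; lra.
set M1 := [set a in A0 | eps * N / 2 <= (deg_in e a A0)%:R].
set M2 := [set b in B0 | eps * N / 4 <= a0 - (deg_in e b A0)%:R].
have hm1 : #|M1|%:R * (eps * N / 2) <= 2 * E.
  rewrite -hs; apply: (markov (P:=A0) (f := fun v => (deg_in e v A0)%:R) (eps * N / 2)).
  by move=> v _; exact: ler0n.
have hm2 : #|M2|%:R * (eps * N / 4) <= N / 4 + 2 * E.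
  by apply: le_trans hdef; exact: (markov (P:=B0) (f := fun b => a0 - (deg_in e b A0)%:R) (eps * N / 4) def0).
have hE' : E <= gamma * N ^+ 2 by [].
case: ha0 => ha1 ha2.
have := @arith R N alpha eps nu gamma #|X|%:R #|Y|%:R #|M1|%:R #|M2|%:R a0 E
  ha anu nu16 he enu hg hg2 hP (ler0n _ _) hX hE' ha1 ha2 (ler0n _ _) hY (ler0n _ _) hm1
  (ler0n _ _) hm2.
set K := (2 * (#|X| + #|Y|)).+1.
have hK : K%:R = 2 * (#|X|%:R + #|Y|%:R) + 1 :> R by rewrite /K -addn1 natrD natrM natrD.
cbv zeta; rewrite -hK => -[[c1 c2 c3 c4] [c5 c6 c7 c8]].
have x0 : 0 <= #|X|%:R :> R by exact: ler0n.
have y0 : 0 <= #|Y|%:R :> R by exact: ler0n.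
have sub2 : A0 :\: X \subset A1 by apply: subsetUl.
have sub1 : B0 :\: Y \subset ~: A1.
  apply/subsetP => v; rewrite /A1 /B0 !inE => /andP[/negbTE vY /negbTE vA].
  by rewrite vY vA andbF.
have QA : forall v, v \in A1 -> N / 4 - (#|X|%:R + #|Y|%:R) <= (deg_in e v (~: A1))%:R.
  move=> v vA.
  have h1 : N / 4 <= (deg_in e v B0)%:R.
    move: vA; rewrite /A1 /X /Y /B0 !inE => /orP[/andP[vX vA0]|/andP[vB hv]].
    - by rewrite vA0 /= -leNgt in vX.
    - by have := dsplit v A0; have := degT v; lra.
  have h2 := ddiff v B0 Y.
  have h3 := dsub v _ _ sub1.
  lra.
have QB : forall v, v \in ~: A1 -> N / 4 - (#|X|%:R + #|Y|%:R) <= (deg_in e v A1)%:R.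
  move=> v vA.
  have h1 : N / 4 <= (deg_in e v A0)%:R.
    move: vA; rewrite /A1 /X /Y !inE negb_or negb_and negbK => /andP[/orP[vX|vA0] vY].
    - move: vX => /andP[vA0 hv].
      by have := dsplit v A0; have := degT v; lra.
    - by rewrite vA0 /= -leNgt in vY.
  have h2 := ddiff v A0 X.
  have h3 := dsub v _ _ sub2.
  lra.
have badA : (#|[set v in A1 | ((deg_in e v (~: A1))%:R < (2^-1 - eps) * N + K%:R)%R]|
     <= #|Y| + #|M1|)%N.
  apply: leq_trans (leq_card_setU Y M1); apply: subset_leq_card; apply/subsetP => v.
  rewrite inE => /andP[vA hv]; rewrite inE; case vY: (v \in Y) => //=.
  have vA0 : v \in A0 by move: vA; rewrite /A1 in_setU vY orbF inE => /andP[_ ->].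
  rewrite /M1 inE vA0 /=.
  have := ddiff v B0 Y; have := dsub v _ _ sub1; have := dsplit v A0; rewrite -/B0.
  have := degT v; lra.
have badB : (#|[set v in ~: A1 | ((deg_in e v A1)%:R < (2^-1 - eps) * N + K%:R)%R]|
     <= #|X| + #|M2|)%N.
  apply: leq_trans (leq_card_setU X M2); apply: subset_leq_card; apply/subsetP => v.
  rewrite inE => /andP[vA hv]; rewrite inE; case vX: (v \in X) => //=.
  have vB0 : v \in B0.
    rewrite /B0 inE; apply/negP => vA0; move: vA; rewrite inE => /negP; apply.
    by apply: (subsetP sub2); rewrite inE vX vA0.
  rewrite /M2 inE vB0 /=.
  have := ddiff v A0 X; have := dsub v _ _ sub2; lra.
have cC : (#|A1| + #|~: A1| = n)%N by rewrite cardsC card_ord.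
have cu : (#|A1| <= #|A0| + #|Y|)%N.
  apply: (leq_trans (leq_card_setU (A0 :\: X) Y)); rewrite leq_add2r.
  by apply: subset_leq_card; apply: subsetDl.
have cl : (#|A0| <= #|A1| + #|X|)%N.
  apply: (@leq_trans #|(A0 :\: X) :|: X|).
    by apply: subset_leq_card; apply/subsetP => v vA; rewrite in_setU in_setD vA andbT; case: (v \in X).
  apply: (leq_trans (leq_card_setU (A0 :\: X) X)); rewrite leq_add2r.
  exact: subset_leq_card.
have [h1 h2] := half_bounds n.
rewrite -cA0 in h1 h2.
have [k1 k2] := cardarith cC cu cl h1 h2.
have badAr := badA; rewrite -(ler_nat R) natrD in badAr.
have badBr := badB; rewrite -(ler_nat R) natrD in badBr.
case: (leqP #|A1| #|~: A1|) => hc.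
- apply: (final (S := A1) (K := K)) => //.
  + by move=> v /QA; rewrite -/N; lra.
  + by move=> v /QB; rewrite -/N; lra.
  + rewrite -/N; lra.
  + rewrite -/N; lra.
- apply: (final (S := ~: A1) (K := K)); rewrite ?setCK => //.
  + exact: ltnW.
  + by move=> v /QB; rewrite -/N; lra.
  + by move=> v /QA; rewrite -/N; lra.
  + rewrite -/N; lra.
  + rewrite -/N; lra.
Qed.
Local Open Scope ring_scope.

Theorem mainTheorem11 (R : archiRealFieldType) :
  exists2 nu0 : R, 0 < nu0 &
  forall nu : R, 0 < nu -> nu <= nu0 ->
  exists2 alpha0 : R, 0 < alpha0 &
  forall alpha eps : R, 0 < alpha -> alpha <= alpha0 -> 0 < eps -> eps <= alpha0 ->
  exists2 gamma0 : R, 0 < gamma0 &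
  forall gamma : R, 0 < gamma -> gamma <= gamma0 ->
  exists n0 : nat, forall n : nat, (n0 <= n)%N ->
  forall e : rel 'I_n, simple_graph e ->
    min_deg_half R e -> gamma_close gamma e ->
    superextremal alpha eps nu e.
Proof.
exists (1/16); first lra.
move=> nu nu0 nu16; exists nu => //.
move=> alpha eps ha hanu he henu.
have hae : 0 < alpha * eps by apply: mulr_gt0.
exists (alpha * eps / 100); first lra.
move=> gamma hg hg2.
exists (Num.bound (100 / (alpha * eps))).
move=> n hn e Ge Gd [A0 [cA0 hE]].
have hb := archi_boundP (_ : 0 <= 100 / (alpha * eps)).
have hN : 100 / (alpha * eps) < n%:R.
  apply: lt_le_trans (hb _) _; first by apply: divr_ge0; lra.
  by rewrite ler_nat.
apply: (construct Ge Gd cA0 hE) => //; try lra.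
have : 100 < n%:R * (alpha * eps) by rewrite -ltr_pdivrMr.
lra.
Qed.
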